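(* Let $G$ be a finite group, $K$ an idempotent semifield, and $V$ an indecomposable representation of $G$ over $K$. Let $H\subseteq G$ be the stabilizer of some basis line of $V$ (so $H$ lies in the conjugacy class of subgroups corresponding to $V$), and pick a section $s:G/H\to G$ of the quotient map onto the set $G/H$ of left cosets. Then there is some $v\in V$ such that every element of $V$ can be written uniquely as $\sum_{g\in s(G/H)}a_g\,gv$ with $a_g\in K$. Moreover, every element of $V$ can be written uniquely as $\sum_{g\in G}a_g\,gv$ with $a_g\in K$ constant on left cosets, i.e. $a_{gh}=a_g$ for all $g\in G$, $h\in H$.
   Context: All semirings are commutative. A semifield is a semiring whose nonzero elements form a multiplicative group; idempotent means $a+a=a$ for all $a$. A representation of $G$ over $K$ is a $K$-linear action of $G$ on a free module $K^n$; it is indecomposable if it is not a direct sum of two nontrivial $G$-stable submodules. A basis line is a submodule spanned by a single vector of some basis; $G$ acts on basis lines by $g\cdot\mathrm{span}(v)=\mathrm{span}(gv)$. *)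

(* Defs.v *)
From HB Require Import structures.
From mathcomp Require Import all_boot all_order all_fingroup all_algebra.
Set Implicit Arguments. Unset Strict Implicit. Unset Printing Implicit Defensive.
Import GRing.Theory.
Local Open Scope ring_scope.

Definition is_semifield (K : comNzSemiRingType) : Prop :=
  forall x : K, x != 0 -> exists y : K, x * y = 1.

Definition is_idempotent (K : comNzSemiRingType) : Prop :=
  forall a : K, a + a = a.

Definition is_rep (K : comNzSemiRingType) (gT : finGroupType) (n : nat)
  (rho : gT -> 'M[K]_n) : Prop :=
  rho 1%g = 1%:M /\ forall g h : gT, rho (g * h)%g = rho g *m rho h.

Definition is_submod (K : comNzSemiRingType) (n : nat) (U : 'cV[K]_n -> Prop) :=
  [/\ U 0, (forall x y, U x -> U y -> U (x + y)) & (forall (a : K) x, U x -> U (a *: x))].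

Definition G_stable (K : comNzSemiRingType) (gT : finGroupType) (n : nat)
  (rho : gT -> 'M[K]_n) (U : 'cV[K]_n -> Prop) :=
  forall (g : gT) x, U x -> U (rho g *m x).

Definition nontrivial_submod (K : comNzSemiRingType) (n : nat) (U : 'cV[K]_n -> Prop) :=
  exists x, U x /\ x != 0.

Definition direct_sum (K : comNzSemiRingType) (n : nat) (U W : 'cV[K]_n -> Prop) :=
  (forall v, exists u w, [/\ U u, W w & v = u + w]) /\
  (forall u w u' w', U u -> W w -> U u' -> W w' -> u + w = u' + w' -> u = u' /\ w = w').

Definition indecomposable (K : comNzSemiRingType) (gT : finGroupType) (n : nat)
  (rho : gT -> 'M[K]_n) : Prop :=
  ~ exists U W : 'cV[K]_n -> Prop,
      [/\ is_submod U /\ is_submod W, G_stable rho U /\ G_stable rho W,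
          nontrivial_submod U /\ nontrivial_submod W & direct_sum U W].

Definition is_basis (K : comNzSemiRingType) (n : nat) (B : 'I_n -> 'cV[K]_n) : Prop :=
  (forall v, exists a : 'I_n -> K, v = \sum_(i < n) a i *: B i) /\
  (forall a a' : 'I_n -> K,
      \sum_(i < n) a i *: B i = \sum_(i < n) a' i *: B i -> forall i, a i = a' i).

Definition span1 (K : comNzSemiRingType) (n : nat) (b : 'cV[K]_n) : 'cV[K]_n -> Prop :=
  fun x => exists a : K, x = a *: b.

(* H is the stabilizer of the basis line span(b): g . span(b) = span(g b). *)
Definition line_stabilizer (K : comNzSemiRingType) (gT : finGroupType) (n : nat)
  (rho : gT -> 'M[K]_n) (b : 'cV[K]_n) (H : {set gT}) : Prop :=
  forall g : gT, g \in H <-> (forall x, span1 (rho g *m b) x <-> span1 b x).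

(* Main.v *)
Require Import Defs.
From HB Require Import structures.
From mathcomp Require Import all_boot all_order all_fingroup all_algebra.
Import GRing.Theory.
Local Open Scope ring_scope.
Set Implicit Arguments. Unset Strict Implicit.
Lemma zsf (K : comNzSemiRingType) (hI : forall a : K, a + a = a) (a b : K) :
  a + b = 0 -> a = 0.
Proof. move=> h; by rewrite -[a]addr0 -h addrA hI. Qed.

Lemma sum0 (K : comNzSemiRingType) (hI : forall a : K, a + a = a)
  (I : finType) (P : pred I) (F : I -> K) :
  \sum_(i | P i) F i = 0 -> forall i, P i -> F i = 0.
Proof. move=> h i Pi; move: h; rewrite (bigD1 i) //=; exact: zsf. Qed.

Lemma sum_nz (K : comNzSemiRingType) (hI : forall a : K, a + a = a)
  (I : finType) (P : pred I) (F : I -> K) i :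
  P i -> F i != 0 -> \sum_(i | P i) F i != 0.
Proof. move=> Pi; apply: contra => /eqP h; apply/eqP; exact: sum0 h i Pi. Qed.

Lemma sum_nz_ex (K : comNzSemiRingType) (I : finType) (P : pred I) (F : I -> K) :
  \sum_(i | P i) F i != 0 -> exists i, P i && (F i != 0).
Proof.
move=> h; apply/existsP; apply: contraNT h; rewrite negb_exists => /forallP Hall.
apply/eqP; apply: big1 => i Pi; move: (Hall i); rewrite Pi /= negbK; exact/eqP.
Qed.

Lemma mulf_nz (K : comNzSemiRingType) (hK : forall x : K, x != 0 -> exists y, x * y = 1)
  (a b : K) : a != 0 -> b != 0 -> a * b != 0.
Proof.
move=> /hK [y hy] hb; apply: contra hb => /eqP hab; apply/eqP.
by rewrite -[b]mul1r -hy (mulrC a) -mulrA hab mulr0.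
Qed.

Lemma nz_mull (K : comNzSemiRingType) (a b : K) : a * b != 0 -> a != 0.
Proof. by apply: contraNneq => ->; rewrite mul0r. Qed.
Lemma nz_mulr (K : comNzSemiRingType) (a b : K) : a * b != 0 -> b != 0.
Proof. by apply: contraNneq => ->; rewrite mulr0. Qed.

Lemma mul_cancel (K : comNzSemiRingType) (hK : forall x : K, x != 0 -> exists y, x * y = 1)
  (x a a' : K) : x != 0 -> a * x = a' * x -> a = a'.
Proof. move=> /hK [y hy] h; by rewrite -[a]mulr1 -hy mulrA h -mulrA hy mulr1. Qed.

Lemma ex_div (K : comNzSemiRingType) (hK : forall x : K, x != 0 -> exists y, x * y = 1)
  (x w : K) : x != 0 -> exists a, a * x = w.
Proof. move=> /hK [y hy]; exists (w * y); by rewrite -mulrA [y * x]mulrC hy mulr1. Qed.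

Lemma mulmx_coord (K : comNzSemiRingType) n (M : 'M[K]_n) (x : 'cV[K]_n) i :
  (M *m x) i 0 = \sum_j M i j * x j 0.
Proof. by rewrite mxE. Qed.
Lemma ss_of_inv (K : comNzSemiRingType) (hI : forall a : K, a + a = a)
  (hK : forall x : K, x != 0 -> exists y, x * y = 1) n (M N : 'M[K]_n) (x : 'cV[K]_n) k :
  M *m N = 1%:M -> N *m M = 1%:M -> x k 0 != 0 -> (forall l, x l 0 != 0 -> l = k) ->
  exists l, (M *m x) l 0 != 0 /\ forall i, (M *m x) i 0 != 0 -> i = l.
Proof.
move=> MN NM xk xs.
have: (N *m (M *m x)) k 0 != 0 by rewrite mulmxA NM mul1mx.
rewrite mulmx_coord => /sum_nz_ex [l /= hl].
exists l; split; first exact: nz_mulr hl.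
move=> i; rewrite mulmx_coord => /sum_nz_ex [m /= hm].
have mk : m = k by apply: xs; exact: nz_mulr hm.
subst m.
case: (eqVneq i l) => // nil; exfalso.
have : (M *m N) i l = 0 by rewrite MN mxE (negbTE nil) mulr0n.
rewrite mxE => /sum0 -/(_ hI k isT) /eqP; apply/negP.
apply: mulf_nz => //; [exact: nz_mull hm | exact: nz_mull hl].
Qed.

Lemma entry_inv (K : comNzSemiRingType) (hI : forall a : K, a + a = a)
  (hK : forall x : K, x != 0 -> exists y, x * y = 1) n (M N : 'M[K]_n) l m :
  M *m N = 1%:M -> N *m M = 1%:M -> M l m != 0 -> N m l != 0.
Proof.
move=> MN NM hlm.
have : (N *m M) m m != 0 by rewrite NM mxE eqxx mulr1n oner_neq0.
rewrite mxE => /sum_nz_ex [l' /= hl'].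
case: (eqVneq l' l) => [<-|nl]; first exact: nz_mull hl'.
exfalso.
have : (M *m N) l l' = 0 by rewrite MN mxE eq_sym (negbTE nl) mulr0n.
rewrite mxE => /sum0 -/(_ hI m isT) /eqP; apply/negP.
apply: mulf_nz => //; exact: nz_mull hl'.
Qed.
Lemma basis_ss (K : comNzSemiRingType) (hI : forall a : K, a + a = a)
  (hK : forall x : K, x != 0 -> exists y, x * y = 1) n (B : 'I_n -> 'cV[K]_n)
  (hB : is_basis B) i0 :
  exists k, B i0 k 0 != 0 /\ forall l, B i0 l 0 != 0 -> l = k.
Proof.
case: hB => hsp hun.
have [A hA] : exists A : 'I_n -> 'I_n -> K, forall l,
    (delta_mx l 0 : 'cV[K]_n) = \sum_(i < n) A l i *: B i.
  exact: (@fin_all_exists _ (fun _ => 'I_n -> K)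
     (fun l a => (delta_mx l 0 : 'cV[K]_n) = \sum_(i < n) a i *: B i) (fun l => hsp _)).
set b := B i0.
have e1 : b = \sum_(i < n) (i == i0)%:R *: B i.
  rewrite (bigD1 i0) //= eqxx scale1r big1 ?addr0 // => i /negbTE ->.
  by rewrite scale0r.
have e2 : b = \sum_(i < n) (\sum_(l < n) b l 0 * A l i) *: B i.
  have -> : \sum_(i < n) (\sum_(l < n) b l 0 * A l i) *: B i
          = \sum_(l < n) b l 0 *: (delta_mx l 0 : 'cV[K]_n).
    under eq_bigr do rewrite scaler_suml.
    rewrite exchange_big /=; apply: eq_bigr => l _.
    by rewrite hA scaler_sumr; apply: eq_bigr => i _; rewrite scalerA.
  apply/matrixP => r c; rewrite ord1 summxE (bigD1 r) //= !mxE eqxx /= mulr1.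
  rewrite big1 ?addr0 // => l nl; rewrite mxE.
  by rewrite !mxE eq_sym (negbTE nl) /= mulr0.
have := hun _ _ (etrans (esym e2) e1) i0; rewrite eqxx => h1.
have : \sum_(l < n) b l 0 * A l i0 != 0 by rewrite h1 oner_neq0.
move=> /sum_nz_ex [k /= hk]; exists k; split; first exact: nz_mull hk.
move=> r hr; case: (eqVneq r k) => // nrk; exfalso.
have : (delta_mx k 0 : 'cV[K]_n) r 0 = 0 by rewrite mxE (negbTE nrk).
rewrite hA summxE => h.
have : \sum_(i < n) A k i * B i r 0 = 0.
  by move: h; under eq_bigr do rewrite mxE.
move=> /sum0 -/(_ hI i0 isT) /eqP; apply/negP; apply: mulf_nz => //.
exact: nz_mulr hk.
Qed.
Unset Implicit Arguments. Set Strict Implicit.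
Theorem lemma3p16 (gT : finGroupType) (K : comNzSemiRingType) (n : nat)
  (rho : gT -> 'M[K]_n)
  (hK : is_semifield K) (hI : is_idempotent K)
  (hrep : is_rep rho) (hind : indecomposable rho)
  (B : 'I_n -> 'cV[K]_n) (hB : is_basis B) (i0 : 'I_n)
  (H : {group gT}) (hH : line_stabilizer rho (B i0) H)
  (s : {set gT} -> gT) (hs : forall C, C \in lcosets H [set: gT] -> s C \in C) :
  exists v : 'cV[K]_n,
    ((forall w : 'cV[K]_n, exists a : {set gT} -> K,
        w = \sum_(C in lcosets H [set: gT]) a C *: (rho (s C) *m v)) /\
     (forall a a' : {set gT} -> K,
        \sum_(C in lcosets H [set: gT]) a C *: (rho (s C) *m v) =
        \sum_(C in lcosets H [set: gT]) a' C *: (rho (s C) *m v) ->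
        forall C, C \in lcosets H [set: gT] -> a C = a' C)) /\
    ((forall w : 'cV[K]_n, exists a : gT -> K,
        (forall g h, h \in H -> a (g * h)%g = a g) /\
        w = \sum_(g : gT) a g *: (rho g *m v)) /\
     (forall a a' : gT -> K,
        (forall g h, h \in H -> a (g * h)%g = a g) ->
        (forall g h, h \in H -> a' (g * h)%g = a' g) ->
        \sum_(g : gT) a g *: (rho g *m v) = \sum_(g : gT) a' g *: (rho g *m v) ->
        forall g, a g = a' g)).
Proof.
case: hrep => rho1 rhoM.
have rhoV : forall g, rho g *m rho (g^-1)%g = 1%:M.
  by move=> g; rewrite -rhoM mulgV rho1.
have rhoV' : forall g, rho (g^-1)%g *m rho g = 1%:M.
  by move=> g; rewrite -rhoM mulVg rho1.
set b := B i0.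
have [k [bk bs]] := basis_ss hI hK hB i0.
have ssg : forall g, exists l, (rho g *m b) l 0 != 0 /\
    forall i, (rho g *m b) i 0 != 0 -> i = l.
  by move=> g; apply: (ss_of_inv hI hK (rhoV g) (rhoV' g) bk bs).
pose j g := odflt k [pick l | (rho g *m b) l 0 != 0].
have jP : forall g l, ((rho g *m b) l 0 != 0) = (l == j g).
  move=> g l; have [l0 [hl0 hs0]] := ssg g; rewrite /j.
  case: pickP => [l' hl' | none] /=; last by move: (none l0); rewrite hl0.
  rewrite (hs0 _ hl'); apply/idP/eqP => [/hs0 //| ->]; by [].
pose lam g := (rho g *m b) (j g) 0.
have lamnz : forall g, lam g != 0 by move=> g; rewrite /lam jP.
have coordE : forall g l, (rho g *m b) l 0 = if l == j g then lam g else 0.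
  move=> g l; case: eqP => [-> //|ne]; apply/eqP; rewrite -[_ == 0]negbK jP.
  exact/eqP.
have j1 : j 1%g = k.
  by apply/esym/eqP; rewrite -jP rho1 mul1mx.
have rhoMb : forall g h, rho (g * h)%g *m b = rho g *m (rho h *m b).
  by move=> g h; rewrite rhoM mulmxA.
have E2 : forall g h l, rho g l (j h) != 0 -> j (g * h)%g = l.
  move=> g h l hne; apply/esym/eqP; rewrite -jP rhoMb mulmx_coord.
  apply: (sum_nz hI (i := j h)) => //; rewrite coordE eqxx.
  exact: mulf_nz.
have E3 : forall g h, rho g (j (g * h)%g) (j h) != 0.
  move=> g h; have : (rho (g * h)%g *m b) (j (g * h)%g) 0 != 0 by rewrite jP.
  rewrite rhoMb mulmx_coord => /sum_nz_ex [m /= hm].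
  have := nz_mulr hm; rewrite jP => /eqP hm'; rewrite -hm'; exact: nz_mull hm.
have J1 : forall g h h', j h = j h' -> j (g * h)%g = j (g * h')%g.
  by move=> g h h' e; apply: E2; rewrite e; apply: E3.
have ssprop : forall (y z : 'cV[K]_n) l, (forall i, i != l -> y i 0 = 0) ->
    (forall i, i != l -> z i 0 = 0) -> z l 0 != 0 -> exists mu, y = mu *: z.
  move=> y z l hy hz /hK [c hc]; exists (y l 0 * c).
  apply/matrixP => i c0; rewrite ord1 mxE; case: (eqVneq i l) => [->|ne].
    by rewrite -mulrA [c * _]mulrC hc mulr1.
  by rewrite hy // hz // mulr0.
have bz : forall i, i != k -> b i 0 = 0.
  move=> i ne; apply/eqP; apply: contraNT ne => /bs ->; by [].
have rz : forall g i, i != j g -> (rho g *m b) i 0 = 0.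
  by move=> g i /negbTE ne; rewrite coordE ne.
have Hchar : forall h, (h \in H) = (j h == k).
  move=> h; apply/idP/eqP => [hin | jk].
    have /(hH h) /(_ b) hb := hin.
    have [a ea] : span1 (rho h *m b) b by apply/hb; exists 1; rewrite scale1r.
    apply/eqP; apply: contraTT bk => ne; rewrite negbK; apply/eqP.
    change (b k 0 = 0); by rewrite {1}ea mxE rz 1?eq_sym // mulr0.
  apply/hH => x.
  have [mu emu] : exists mu, rho h *m b = mu *: b.
    by apply: (ssprop _ _ k) => // i; rewrite -jk; apply: rz.
  have [nu enu] : exists nu, b = nu *: (rho h *m b).
    by apply: (ssprop _ _ k) => //; [move=> i; rewrite -jk; apply: rz| rewrite jP jk].
  split=> [[a ->]|[a ->]].
    by exists (a * mu); rewrite emu scalerA.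
  by exists (a * nu); rewrite -/b {1}enu scalerA.
have P2 : forall g g', (j g == j g') = ((g^-1 * g')%g \in H).
  move=> g g'; rewrite Hchar; apply/eqP/eqP => [e | e].
    by rewrite -j1 -(mulVg g); apply: J1.
  by have := J1 g _ _ (etrans e (esym j1)); rewrite mulKVg mulg1 => ->.
pose img l := [exists g, j g == l].
have imgj : forall g, img (j g) by move=> g; apply/existsP; exists g.
have surj : forall l, exists g, j g = l.
  move=> l0; case: (boolP (img l0)) => [/existsP [g /eqP] | nimg]; first by exists g.
  exfalso; apply: hind.
  exists (fun x : 'cV[K]_n => forall l, ~~ img l -> x l 0 = 0).
  exists (fun x : 'cV[K]_n => forall l, img l -> x l 0 = 0).
  split.
  - split; (split; [by move=> l _; rewrite mxE
                   | by move=> x y hx hy l hl; rewrite mxE hx // hy // addr0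
                   | by move=> a x hx l hl; rewrite mxE hx // mulr0]).
  - split.
    + move=> g x hx l hl; rewrite mulmx_coord big1 // => m _.
      case: (boolP (img m)) => [/existsP [h /eqP <-] | nm]; last by rewrite hx // mulr0.
      have : rho g l (j h) == 0.
        apply: contraNT hl => hne; rewrite -(E2 _ _ _ hne); exact: imgj.
      by move/eqP ->; rewrite mul0r.
    + move=> g x hx l /existsP [h /eqP <-]; rewrite mulmx_coord big1 // => m _.
      case: (boolP (img m)) => [im | nm]; first by rewrite hx // mulr0.
      have : rho g (j h) m == 0.
        apply: contraNT nm => hne.
        have := entry_inv hI hK (rhoV g) (rhoV' g) hne => /E2 <-; exact: imgj.
      by move/eqP ->; rewrite mul0r.
  - split.
    + exists b; split; last by apply: contraNneq bk => b0; change (b k 0 == 0); rewrite b0 mxE.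
      move=> l hl; apply: bz; apply: contraNneq hl => ->; rewrite -j1; exact: imgj.
    + exists (delta_mx l0 0); split; last first.
        by apply/eqP => /matrixP /(_ l0 0); rewrite !mxE !eqxx /=; apply/eqP/oner_neq0.
      move=> l hl; rewrite mxE; case: (eqVneq l l0) => [e|ne]; first by move: hl; rewrite e (negbTE nimg).
      by rewrite /= mulr0n.
  - split.
    + move=> x; exists (\matrix_(i, c) (if img i then x i c else 0)).
      exists (\matrix_(i, c) (if img i then 0 else x i c)).
      split; [by move=> l hl; rewrite mxE (negbTE hl)
             | by move=> l hl; rewrite mxE hl
             | apply/matrixP => i c; rewrite !mxE; case: (img i); rewrite ?addr0 ?add0r //].
    + move=> u w u' w' hu hw hu' hw' e; split; apply/matrixP => i c; rewrite ord1;
      have := congr1 (fun M : 'cV[K]_n => M i 0) e; rewrite /= !mxE;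
      case: (boolP (img i)) => ii.
      * by rewrite hw // hw' // !addr0.
      * by rewrite hu // hu' // !add0r => _; rewrite hu // hu'.
      * by rewrite hw // hw'.
      * by rewrite hu // hu' // !add0r.
set L := lcosets H [set: gT].
have jsC : forall g, j (s (g *: H)%g) = j g.
  move=> g; apply/esym/eqP; rewrite P2 -mem_lcoset; apply: hs.
  by apply/lcosetsP; exists g; rewrite ?inE.
have sCeq : forall C, C \in L -> C = (s C *: H)%g.
  move=> C /lcosetsP [x _ ->]; apply/esym/lcoset_eqP; apply: hs.
  by apply/lcosetsP; exists x; rewrite ?inE.
have Cinj : forall C C', C \in L -> C' \in L -> j (s C) = j (s C') -> C = C'.
  move=> C C' hC hC' /eqP; rewrite P2 -mem_lcoset => /lcoset_eqP e.
  by rewrite (sCeq C) // (sCeq C') // e.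
have gHL : forall g, (g *: H)%g \in L by move=> g; apply/lcosetsP; exists g; rewrite ?inE.
have S1 : forall (a : {set gT} -> K) C0, C0 \in L ->
    (\sum_(C in L) a C *: (rho (s C) *m b)) (j (s C0)) 0 = a C0 * lam (s C0).
  move=> a C0 hC0; rewrite summxE (bigD1 C0) //= mxE coordE eqxx big1 ?addr0 //.
  move=> C /andP [hC ne]; rewrite mxE coordE.
  case: eqP => [e|_]; last by rewrite mulr0.
  by move: ne; rewrite (Cinj _ _ hC0 hC e) eqxx.
pose Lam l := \sum_(g | j g == l) lam g.
have Lamnz : forall l, Lam l != 0.
  move=> l; have [g jg] := surj l; apply: (sum_nz hI (i := g)) => //; by rewrite jg.
have S2 : forall (a : gT -> K), (forall g h, h \in H -> a (g * h)%g = a g) -> forall g0,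
    (\sum_g a g *: (rho g *m b)) (j g0) 0 = a g0 * Lam (j g0).
  move=> a ha g0; rewrite summxE /Lam mulr_sumr [RHS]big_mkcond /=.
  apply: eq_bigr => g _; rewrite mxE coordE eq_sym.
  case: (eqVneq (j g) (j g0)) => [e|_]; last by rewrite mulr0.
  have : (g0^-1 * g)%g \in H by rewrite -P2 e.
  by move/(ha g0); rewrite mulKVg => ->.
exists b; split; split.
- move=> w.
  have [a ha] := @fin_all_exists _ (fun _ => K)
     (fun C a => C \in L -> a * lam (s C) = w (j (s C)) 0)
     (fun C => let: ex_intro a h := ex_div hK (w (j (s C)) 0) (lamnz (s C)) in
               ex_intro _ a (fun _ => h)).
  exists a; apply/matrixP => l c; rewrite ord1.
  have [g <-] := surj l; rewrite -jsC S1 ?ha //.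
- move=> a a' e C hC; apply: (mul_cancel hK (lamnz (s C))).
  by rewrite -!S1 // e.
- move=> w.
  have [be hbe] := @fin_all_exists _ (fun _ => K)
     (fun l be => be * Lam l = w l 0)
     (fun l => ex_div hK (w l 0) (Lamnz l)).
  have hc : forall g h, h \in H -> be (j (g * h)%g) = be (j g).
    by move=> g h hh; congr be; apply/esym/eqP; rewrite P2 mulKg.
  exists (fun g => be (j g)); split => //.
  apply/matrixP => l c; rewrite ord1.
  have [g <-] := surj l; rewrite (S2 (fun g => be (j g))) //.
- move=> a a' ha ha' e g; apply: (mul_cancel hK (Lamnz (j g))).
  by rewrite -S2 // -S2 // e.
Qed.
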